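(* For every integer $k\ge 2$, the cube polynomials of the $k$-Pell graphs satisfy $$C_{\Pi_{n,k}}(x)=\bigl(k+(k-1)x\bigr)\,C_{\Pi_{n-1,k}}(x)+(1+x)\,C_{\Pi_{n-2,k}}(x),\qquad n\ge 2,$$ with $C_{\Pi_{0,k}}(x)=1$ and $C_{\Pi_{1,k}}(x)=k+(k-1)x$.
   Context: For an integer $k\ge 2$, a $k$-Pell string is a finite word over the alphabet $\{0,1,\ldots,k-1,kk\}$, i.e. a word over $\{0,1,\ldots,k\}$ in which every maximal run of the letter $k$ has even length. For $n\ge 0$, the $k$-Pell graph $\Pi_{n,k}$ has as vertices all $k$-Pell strings of length $n$, and two vertices are adjacent if one is obtained from the other either by replacing a single letter $i$ by $i+1$ (or vice versa) for some $i\in\{0,1,\ldots,k-2\}$, or by replacing one factor $(k-1)(k-1)$ by $kk$ (or vice versa), in such a way that the resulting string is again a $k$-Pell string. The cube polynomial of a graph $G$ is $C_G(x)=\sum_{i\ge 0}c_i(G)x^i$, where $c_i(G)$ is the number of induced subgraphs of $G$ isomorphic to the hypercube $Q_i$. *)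

(* Defs.v *)
From HB Require Import structures.
From mathcomp Require Import all_boot all_order all_algebra.
Set Implicit Arguments. Unset Strict Implicit. Unset Printing Implicit Defensive.
Import Order.TTheory GRing.Theory Num.Theory.

Definition qadj (i : nat) (u v : {ffun 'I_i -> bool}) : bool :=
  #|[set j | u j != v j]| == 1.

Definition induces_cube (V : finType) (e : rel V) (i : nat) (S : {set V}) : bool :=
  [exists f : {ffun {ffun 'I_i -> bool} -> V},
     [&& injectiveb f, f @: setT == S &
         [forall u, forall v, e (f u) (f v) == qadj u v]]].

Definition cube_count (V : finType) (e : rel V) (i : nat) : nat :=
  #|[set S : {set V} | induces_cube e i S]|.

(* C_G(x) = sum_i c_i(G) x^i ; c_i(G) = 0 as soon as i > #|V| (2^i > #|V|),
   so the sum over i <= #|V| is the full sum. *)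
Definition cube_poly (V : finType) (e : rel V) : {poly int} :=
  (\poly_(i < #|V|.+1) (cube_count e i)%:R)%R.

(* A word over {0,...,k} is a k-Pell string iff every maximal run of the
   letter k has even length, i.e. it parses (greedily from the left) as a
   word over {0,...,k-1, kk}. *)
Fixpoint pellb (k : nat) (s : seq nat) : bool :=
  match s with
  | [::] => true
  | a :: t =>
      if a == k then
        match t with
        | [::] => false
        | b :: t' => (b == k) && pellb k t'
        end
      else pellb k t
  end.

Definition pell_vertex (n k : nat) :=
  {t : n.-tuple 'I_k.+1 | pellb k (map val t)}.

Definition letter n k (t : n.-tuple 'I_k.+1) (i : 'I_n) : nat := val (tnth t i).

Definition step1 n k (u v : n.-tuple 'I_k.+1) : bool :=
  [exists i : 'I_n,
     [&& [forall j : 'I_n, (j != i) ==> (letter u j == letter v j)],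
         (letter u i).+1 == letter v i & letter v i <= k - 1]].

Definition step2 n k (u v : n.-tuple 'I_k.+1) : bool :=
  [exists i : 'I_n, exists i' : 'I_n,
     [&& val i' == (val i).+1,
         letter u i == k - 1, letter u i' == k - 1,
         letter v i == k, letter v i' == k &
         [forall j : 'I_n, ((j != i) && (j != i')) ==> (letter u j == letter v j)]]].

Definition pell_adj (n k : nat) : rel (pell_vertex n k) :=
  fun x y => let u := val x in let v := val y in
    [|| step1 u v, step1 v u, step2 u v | step2 v u].

Definition pell_cube_poly (n k : nat) : {poly int} := cube_poly (@pell_adj n k).

(* Main.v *)
Require Import Defs.
From HB Require Import structures.
From mathcomp Require Import all_boot all_order all_algebra.
From mathcomp Require Import zify ring.
Set Implicit Arguments. Unset Strict Implicit. Unset Printing Implicit Defensive.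

Definition Q i := {ffun 'I_i -> bool}.
Definition flip i (d : 'I_i) (u : Q i) : Q i :=
  [ffun j => if j == d then ~~ u j else u j].
Definition diffs i (u v : Q i) := [set j | u j != v j].

Lemma qadjE i (u v : Q i) : qadj u v = (#|diffs u v| == 1).
Proof. by []. Qed.

Lemma qadj_sym i (u v : Q i) : qadj u v = qadj v u.
Proof.
rewrite !qadjE; suff -> : diffs u v = diffs v u by [].
apply/setP => j; by rewrite !inE eq_sym.
Qed.

Lemma diffs0 i (u v : Q i) : (diffs u v == set0) = (u == v).
Proof.
apply/eqP/eqP => [H|->]; last by apply/setP => j; rewrite !inE eqxx.
apply/ffunP => j; apply/eqP; apply/negPn; apply/negP => Hj.
have : j \in diffs u v by rewrite inE.
by rewrite H inE.
Qed.

Lemma qadj_irr i (u : Q i) : qadj u u = false.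
Proof. rewrite qadjE; have /eqP -> : diffs u u == set0 by rewrite diffs0.
by rewrite cards0. Qed.

Lemma qadj_flip i d (u : Q i) : qadj u (flip d u).
Proof.
rewrite qadjE; have -> : diffs u (flip d u) = [set d].
  apply/setP => j; rewrite !inE ffunE; case: (j =P d) => [->|/eqP Hjd].
    by rewrite ?eqxx; case: (u d).
  by rewrite ?eqxx ?(negbTE Hjd).
by rewrite cards1.
Qed.

Lemma qadjP i (u v : Q i) : qadj u v -> exists d, v = flip d u.
Proof.
rewrite qadjE => /cards1P [d Hd]; exists d; apply/ffunP => j; rewrite ffunE.
have : (j \in diffs u v) = (j \in [set d]) by rewrite Hd.
rewrite !inE; case: (j =P d) => [->|/eqP Hjd]; rewrite ?eqxx ?(negbTE Hjd).
  by case: (u d); case: (v d).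
by move/negbFE/eqP.
Qed.

Lemma flipK i d (u : Q i) : flip d (flip d u) = u.
Proof. apply/ffunP => j; rewrite !ffunE; case: eqP => //; by rewrite negbK. Qed.

Lemma flipC i d d' (u : Q i) : flip d (flip d' u) = flip d' (flip d u).
Proof. apply/ffunP => j; rewrite !ffunE; by case: eqP; case: eqP. Qed.

Lemma flip_neq i d (u : Q i) : flip d u != u.
Proof. apply/negP => /eqP /ffunP /(_ d); rewrite ffunE eqxx; by case: (u d). Qed.

Lemma flip2_neq i d d' (u : Q i) : d != d' -> flip d (flip d' u) != u.
Proof.
move=> Hd; apply/negP => /eqP /ffunP /(_ d); rewrite !ffunE eqxx (negbTE Hd).
by case: (u d).
Qed.

Lemma Qconn i (P : Q i -> Prop) :
  (forall u d, P u -> P (flip d u)) -> forall u v, P u -> P v.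
Proof.
move=> HP u v; move Hn: #|diffs u v| => n; elim: n v Hn => [|n IH] v Hn Pu.
  have /eqP <- : u == v by rewrite -diffs0 -cards_eq0 Hn.
  done.
have : 0 < #|diffs u v| by rewrite Hn.
case/card_gt0P => d Hd.
have Hv : diffs u (flip d v) = diffs u v :\ d.
  apply/setP => j; rewrite !inE ffunE; case: (j =P d) => [->|/eqP Hjd].
    by rewrite ?eqxx /=; move: Hd; rewrite inE; case: (u d); case: (v d).
  by rewrite ?(negbTE Hjd).
have := cardsD1 d (diffs u v); rewrite Hd Hn -Hv add1n => -[] /esym /IH /(_ Pu).
by move/(HP _ d); rewrite flipK.
Qed.

Section Ins.
Variable i : nat.
Variable d0 : 'I_i.+1.

Definition ins (b : bool) (w : Q i) : Q i.+1 :=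
  [ffun j => if unlift d0 j is Some j' then w j' else b].
Definition rest (u : Q i.+1) : Q i := [ffun j => u (lift d0 j)].

Lemma ins_d0 b (w : Q i) : ins b w d0 = b.
Proof. by rewrite ffunE unlift_none. Qed.

Lemma ins_lift b (w : Q i) j : ins b w (lift d0 j) = w j.
Proof. by rewrite ffunE liftK. Qed.

Lemma ins_rest (u : Q i.+1) : ins (u d0) (rest u) = u.
Proof.
apply/ffunP => j; rewrite ffunE; case: unliftP => [j' ->|->] //; by rewrite ffunE.
Qed.

Lemma rest_ins b w : rest (ins b w) = w.
Proof. apply/ffunP => j; by rewrite ffunE ins_lift. Qed.

Lemma ins_inj b b' w w' : ins b w = ins b' w' -> b = b' /\ w = w'.
Proof.
move=> H; split; first by rewrite -(ins_d0 b w) H ins_d0.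
by rewrite -(rest_ins b w) H rest_ins.
Qed.

Lemma flip_ins_d0 b w : flip d0 (ins b w) = ins (~~ b) w.
Proof.
apply/ffunP => j; rewrite !ffunE; case: unliftP => [j' ->|->]; last by rewrite eqxx.
by rewrite eq_sym (negbTE (neq_lift _ _)).
Qed.

Lemma flip_ins_lift b w j' : flip (lift d0 j') (ins b w) = ins b (flip j' w).
Proof.
apply/ffunP => j; rewrite !ffunE; case: unliftP => [j'' ->|->].
  by rewrite (inj_eq (@lift_inj _ d0)) ffunE.
by rewrite (negbTE (neq_lift _ _)).
Qed.

Lemma diffs_ins b w w' :
  diffs (ins b w) (ins b w') = [set lift d0 j | j in diffs w w'].
Proof.
apply/setP => j; rewrite inE !ffunE; case: unliftP => [j' ->|->].
  by rewrite mem_imset ?inE //; exact: lift_inj.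
rewrite eqxx; apply/esym/negP => /imsetP [x _ /eqP]; by rewrite (negbTE (neq_lift _ _)).
Qed.

Lemma qadj_ins b w w' : qadj (ins b w) (ins b w') = qadj w w'.
Proof. by rewrite !qadjE diffs_ins card_imset //; exact: lift_inj. Qed.

Lemma qadj_ins_neq b w w' : qadj (ins b w) (ins (~~ b) w') = (w == w').
Proof.
rewrite qadjE; have -> : diffs (ins b w) (ins (~~ b) w') = d0 |: [set lift d0 j | j in diffs w w'].
  apply/setP => j; rewrite !inE !ffunE; case: unliftP => [j' ->|->].
    have -> : (lift d0 j' == d0) = false by rewrite eq_sym (negbTE (neq_lift _ _)).
    rewrite /= mem_imset ?inE //; exact: lift_inj.
  by rewrite eqxx; case: b.
rewrite cardsU1 card_imset; last exact: lift_inj.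
have -> : (d0 \notin [set lift d0 j | j in diffs w w']).
  apply/negP => /imsetP [x _ /eqP]; by rewrite (negbTE (neq_lift _ _)).
by rewrite /= add1n eqSS cards_eq0 diffs0.
Qed.

End Ins.

Definition cubefun (T : finType) (e : rel T) i (F : Q i -> T) :=
  injective F /\ forall u v, e (F u) (F v) = qadj u v.

Section CubeG.
Variables (W : finType) (eW : rel W).

Lemma cube_intro i (F : Q i -> W) : cubefun eW F -> induces_cube eW i (F @: setT).
Proof.
move=> [Fi Fa]; apply/existsP; exists (finfun F); apply/and3P; split.
- by apply/injectiveP => u v; rewrite !ffunE; exact: Fi.
- by apply/eqP; apply: eq_imset => u; rewrite ffunE.
- by apply/forallP => u; apply/forallP => v; rewrite !ffunE Fa.
Qed.

Lemma cube_elim i S : induces_cube eW i S ->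
  exists F : Q i -> W, cubefun eW F /\ S = F @: setT.
Proof.
case/existsP => f /and3P [/injectiveP Hi /eqP Him /forallP Ha].
exists f; split => //; split => // u v; exact: (eqP (forallP (Ha u) v)).
Qed.

Lemma cube_nonempty i S : induces_cube eW i S -> exists x, x \in S.
Proof.
case/cube_elim => F [_ ->]; exists (F [ffun => false]); exact: imset_f.
Qed.

End CubeG.

Section Cube.
Variables (V W : finType) (eV : rel V) (eW : rel W).

Lemma cube_comp i (F : Q i -> V) (g : V -> W) :
  injective g -> (forall x y, eW (g x) (g y) = eV x y) ->
  cubefun eV F -> cubefun eW (g \o F).
Proof.
move=> gi ga [Fi Fa]; split; first exact: inj_comp.
by move=> u v /=; rewrite ga Fa.
Qed.

Lemma emb_cube i (g : V -> W) (S : {set V}) :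
  injective g -> (forall x y, eW (g x) (g y) = eV x y) ->
  induces_cube eV i S -> induces_cube eW i (g @: S).
Proof.
move=> gi ga /cube_elim [F [HF ->]]; rewrite -imset_comp; apply: cube_intro.
exact: cube_comp.
Qed.

Lemma emb_cube_back i (g : V -> W) (r : W -> V) (S : {set W}) :
  (forall x y, eW (g x) (g y) = eV x y) -> {in S, forall y, g (r y) = y} ->
  induces_cube eW i S -> induces_cube eV i (r @: S) /\ S = g @: (r @: S).
Proof.
move=> ga gr HS; split; last first.
  apply/setP => y; apply/idP/imsetP.
    by move=> Hy; exists (r y); [apply: imset_f | rewrite gr].
  by case=> x /imsetP [z Hz ->] ->; rewrite gr.
move: HS gr => /cube_elim [F [[Fi Fa] ->]] gr.
rewrite -imset_comp; apply: cube_intro; split.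
  move=> u v /= H; apply: Fi; rewrite -(gr (F u)) ?imset_f // -(gr (F v)) ?imset_f //.
  by rewrite H.
by move=> u v /=; rewrite -ga !gr ?imset_f // Fa.
Qed.

Lemma prism_cube i (g0 g1 : V -> W) (T : {set V}) :
  injective g0 -> injective g1 ->
  (forall x y, eW (g0 x) (g0 y) = eV x y) ->
  (forall x y, eW (g1 x) (g1 y) = eV x y) ->
  (forall x y, eW (g0 x) (g1 y) = (x == y)) ->
  (forall x y, eW (g1 x) (g0 y) = (x == y)) ->
  (forall x y, g0 x != g1 y) ->
  induces_cube eV i T -> induces_cube eW i.+1 (g0 @: T :|: g1 @: T).
Proof.
move=> g0i g1i g0a g1a g01 g10 gn /cube_elim [F [[Fi Fa] ->]].
pose G (u : Q i.+1) := if u ord0 then g1 (F (rest ord0 u)) else g0 (F (rest ord0 u)).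
have GE b w : G (ins ord0 b w) = if b then g1 (F w) else g0 (F w).
  by rewrite /G ins_d0 rest_ins.
have -> : g0 @: (F @: setT) :|: g1 @: (F @: setT) = G @: setT.
  apply/setP => y; apply/setUP/imsetP.
    case=> /imsetP [x /imsetP [w _ ->] ->].
      by exists (ins ord0 false w); rewrite ?GE.
    by exists (ins ord0 true w); rewrite ?GE.
  case=> u _ ->; rewrite -(ins_rest ord0 u) GE.
  by case: (u ord0); [right | left]; apply: imset_f; apply: imset_f.
apply: cube_intro; split.
  move=> u v; rewrite -(ins_rest ord0 u) -(ins_rest ord0 v) !GE.
  case: (u ord0); case: (v ord0) => H.
  - by rewrite (Fi _ _ (g1i _ _ H)).
  - by move: (gn (F (rest ord0 v)) (F (rest ord0 u))); rewrite H eqxx.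
  - by move: (gn (F (rest ord0 u)) (F (rest ord0 v))); rewrite H eqxx.
  - by rewrite (Fi _ _ (g0i _ _ H)).
move=> u v; rewrite -(ins_rest ord0 u) -(ins_rest ord0 v) !GE.
case: (u ord0); case: (v ord0).
- by rewrite g1a Fa qadj_ins.
- by rewrite g10 (inj_eq Fi) (qadj_ins_neq ord0 true).
- by rewrite g01 (inj_eq Fi) (qadj_ins_neq ord0 false).
- by rewrite g0a Fa qadj_ins.
Qed.

Lemma Q0_eq (u v : Q 0) : u = v.
Proof. by apply/ffunP => -[]. Qed.

Lemma cube_count0 : irreflexive eW -> cube_count eW 0 = #|W|.
Proof.
move=> irr; rewrite /cube_count.
have -> : [set S | induces_cube eW 0 S] = (@set1 W) @: setT.
  apply/setP => S; rewrite inE; apply/idP/imsetP.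
    case/cube_elim => F [_ ->]; exists (F [ffun => false]) => //.
    apply/setP => y; rewrite inE; apply/imsetP/eqP => [[u _ ->]|->].
      by rewrite (Q0_eq u [ffun => false]).
    by exists [ffun => false].
  case=> x _ ->.
  have -> : [set x] = (fun _ : Q 0 => x) @: setT.
    apply/setP => y; rewrite inE; apply/eqP/imsetP => [->|[u _ ->]] //.
    by exists [ffun => false].
  apply: cube_intro; split; first by move=> u v _; exact: Q0_eq.
  by move=> u v; rewrite irr (Q0_eq u v) qadj_irr.
by rewrite card_imset ?cardsT //; exact: set1_inj.
Qed.

Lemma cube_count_big i : #|W| < 2 ^ i -> cube_count eW i = 0.
Proof.
move=> Hl; apply/eqP; rewrite cards_eq0; apply/eqP/setP => S; rewrite !inE.
apply/negbTE/negP => /cube_elim [F [[Fi _] _]].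
have := leq_card F Fi; rewrite card_ffun card_bool card_ord.
by rewrite leqNgt Hl.
Qed.

Lemma coef_cube_poly i : ((cube_poly eW)`_i = (cube_count eW i)%:R)%R.
Proof.
rewrite /cube_poly coef_poly; case: ifP => // /negbT; rewrite -leqNgt => Hi.
rewrite cube_count_big //; apply: leq_trans Hi _; exact: ltnW (ltn_expl _ _).
Qed.

Variable h : W -> nat.
Hypothesis HA : forall x y, eW x y -> h x != h y -> h x = (h y).+1 \/ h y = (h x).+1.
Hypothesis HB : forall a b c, eW a b -> eW c b -> h a = h c -> h a != h b -> a = c.

Lemma flip_d_inj i (d d' : 'I_i) u : flip d u = flip d' u -> d = d'.
Proof.
move=> /ffunP /(_ d); rewrite !ffunE eqxx; case: eqP => // _; by case: (u d).
Qed.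

Lemma cube_structure i (S : {set W}) : induces_cube eW i S ->
  (exists p, forall x, x \in S -> h x = p) \/
  (exists i', exists F0 F1 : Q i' -> W, exists p0 p1,
     [/\ i = i'.+1, cubefun eW F0, cubefun eW F1, forall w, eW (F0 w) (F1 w) &
       [/\ p0 != p1, forall w, h (F0 w) = p0, forall w, h (F1 w) = p1 &
           S = F0 @: setT :|: F1 @: setT]]).
Proof.
case: i S => [|i] S.
  case/cube_elim => f [_ ->]; left; exists (h (f [ffun => false])) => x /imsetP [u _ ->].
  by rewrite (Q0_eq u [ffun => false]).
case/cube_elim => f [[fi fa] ->].
pose hf u := h (f u).
have ed u d : eW (f u) (f (flip d u)) by rewrite fa qadj_flip.
have ed' u d : eW (f (flip d u)) (f u) by rewrite fa qadj_sym qadj_flip.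
have HA' x y : eW x y -> h x = h y \/ h x = (h y).+1 \/ h y = (h x).+1.
  move=> Hxy; case: (eqVneq (h x) (h y)) => [|/(HA Hxy)]; tauto.
pose ch d u := hf (flip d u) != hf u.
have claim1 u d d' : d != d' -> ch d u -> ch d' u -> False.
  move=> Hdd /eqP H1 /eqP H2.
  have N12 : hf (flip d u) != hf (flip d' u).
    apply/eqP => E; move/eqP: Hdd; apply; apply: (@flip_d_inj _ _ _ u); apply: fi.
    apply: HB (ed' u d) (ed' u d') E _; exact/eqP.
  have N03 : hf u != hf (flip d' (flip d u)).
    have Hd'd : d' != d by rewrite eq_sym.
    apply/eqP => E; apply: (negP (flip2_neq u Hd'd)); apply/eqP; apply: esym; apply: fi.
    apply: (HB (ed u d) (ed' (flip d u) d') E).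
    by apply/eqP => E'; apply: H1; rewrite /hf -E'.
  have := HA' _ _ (ed u d); have := HA' _ _ (ed u d').
  have := HA' _ _ (ed (flip d u) d'); have := HA' _ _ (ed (flip d' u) d).
  rewrite (flipC d d' u).
  move: N12 N03 H1 H2; rewrite /hf; move=> /eqP ? /eqP ? ? ?; lia.
have claim2 u d d' : ch d u -> d != d' -> ch d (flip d' u).
  move=> Hc Hdd.
  have E2 : hf (flip d' u) = hf u.
    apply/eqP; apply/negPn/negP => C; exact: (claim1 u d d' Hdd Hc C).
  have Hc1 : ch d (flip d u) by rewrite /ch flipK eq_sym.
  have E3 : hf (flip d' (flip d u)) = hf (flip d u).
    apply/eqP; apply/negPn/negP => C; exact: (claim1 _ d d' Hdd Hc1 C).
  by rewrite /ch flipC E3 E2.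
have chinv d u d' : ch d u -> ch d (flip d' u).
  move=> Hc; case: (eqVneq d d') => [<-|Hdd]; last exact: claim2.
  by rewrite /ch flipK eq_sym.
have chall d u v : ch d u -> ch d v.
  move=> Hc; apply: (@Qconn _ (fun w => ch d w) _ u) => // w d' ; exact: chinv.
pose u0 : Q i.+1 := [ffun => false].
case: (boolP [exists d, ch d u0]) => [/existsP [d0 Hd0]|Hn].
- right; exists i, (fun w => f (ins d0 false w)), (fun w => f (ins d0 true w)).
  pose w0 : Q i := [ffun => false].
  exists (hf (ins d0 false w0)), (hf (ins d0 true w0)).
  have cst b w : hf (ins d0 b w) = hf (ins d0 b w0).
    apply: (@Qconn _ (fun w => hf (ins d0 b w) = hf (ins d0 b w0)) _ w0) => // v j' Hv.
    rewrite -flip_ins_lift -Hv; apply/eqP; apply/negPn/negP => C.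
    apply: (claim1 (ins d0 b v) d0 (lift d0 j') (neq_lift _ _)) => //.
    exact: chall Hd0.
  split => //.
  + split; first by move=> w w' /fi /ins_inj [].
    by move=> w w'; rewrite fa qadj_ins.
  + split; first by move=> w w' /fi /ins_inj [].
    by move=> w w'; rewrite fa qadj_ins.
  + by move=> w; rewrite -[ins d0 true w]/(ins d0 (~~ false) w) -flip_ins_d0.
  split => //.
  + have := chall _ _ (ins d0 false w0) Hd0; by rewrite /ch flip_ins_d0 eq_sym.
  + exact: cst.
  + exact: cst.
  apply/setP => y; apply/imsetP/setUP.
    case=> u _ ->; rewrite -(ins_rest d0 u).
    by case: (u d0); [right|left]; apply: imset_f.
  by case=> /imsetP [w _ ->]; eexists.
- left; exists (hf u0) => x /imsetP [u _ ->].
  have Hc d v : ~~ ch d v.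
    apply/negP => C; move/existsP: Hn; apply; exists d; exact: chall C.
  apply: (@Qconn _ (fun w => hf w = hf u0) _ u0) => // v d Hv.
  by move: (Hc d v); rewrite /ch negbK => /eqP ->.
Qed.

Lemma pair_back i (F0 F1 : Q i -> W) (g0 g1 : V -> W) (r : W -> V) :
  cubefun eW F1 -> (forall w, g1 (r (F1 w)) = F1 w) -> (forall w, F0 w = g0 (r (F1 w))) ->
  (forall x y, eW (g1 x) (g1 y) = eV x y) ->
  induces_cube eV i ((r \o F1) @: setT) /\
  F0 @: setT :|: F1 @: setT = g0 @: ((r \o F1) @: setT) :|: g1 @: ((r \o F1) @: setT).
Proof.
move=> [Fi Fa] H1 H0 ga; split.
  apply: cube_intro; split.
    by move=> u v /= E; apply: Fi; rewrite -H1 E H1.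
  by move=> u v /=; rewrite -ga !H1 Fa.
rewrite -!imset_comp; congr (_ :|: _); apply: eq_imset => w /=; by rewrite ?H0 ?H1.
Qed.

Lemma union_inj (g0 g1 : V -> W) : injective g0 -> (forall x y, g0 x != g1 y) ->
  injective (fun T : {set V} => g0 @: T :|: g1 @: T).
Proof.
move=> gi gn T T' H.
have E (U : {set V}) x : (x \in U) = (g0 x \in g0 @: U :|: g1 @: U).
  rewrite in_setU mem_imset //; case: (x \in U) => //=.
  by apply/esym/negbTE/negP => /imsetP [y _ /eqP]; rewrite (negbTE (gn _ _)).
by apply/setP => x; rewrite E H -E.
Qed.

End Cube.

Section Fun.
Variable k : nat.
Hypothesis hk : 0 < k.

Definition S1 n (a b : nat -> nat) := exists p,
  [/\ p < n, forall q, q != p -> a q = b q, (a p).+1 = b p & b p <= k - 1].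
Definition S2 n (a b : nat -> nat) := exists p,
  [/\ p.+1 < n, forall q, q != p -> q != p.+1 -> a q = b q,
      a p = k - 1, a p.+1 = k - 1 & (b p = k /\ b p.+1 = k)].
Definition ADJ n a b := [\/ S1 n a b, S1 n b a, S2 n a b | S2 n b a].
Definition shift (a : nat -> nat) q := a q.+1.

Lemma S1_ext n a b a' b' : a =1 a' -> b =1 b' -> S1 n a b -> S1 n a' b'.
Proof.
move=> Ha Hb [p [H1 H2 H3 H4]]; exists p; split => //; rewrite -?Ha -?Hb //.
by move=> q Hq; rewrite -Ha -Hb H2.
Qed.

Lemma S2_ext n a b a' b' : a =1 a' -> b =1 b' -> S2 n a b -> S2 n a' b'.
Proof.
move=> Ha Hb [p [H1 H2 H3 H4 [H5 H6]]]; exists p; split; rewrite -?Ha -?Hb //.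
by move=> q Hq Hq'; rewrite -Ha -Hb H2.
Qed.

Lemma ADJ_ext n a b a' b' : a =1 a' -> b =1 b' -> ADJ n a b -> ADJ n a' b'.
Proof.
move=> Ha Hb [H|H|H|H].
- by apply: Or41; exact: S1_ext H.
- by apply: Or42; exact: S1_ext H.
- by apply: Or43; exact: S2_ext H.
- by apply: Or44; exact: S2_ext H.
Qed.

Lemma ADJ_sym n a b : ADJ n a b -> ADJ n b a.
Proof. by case=> H; [apply: Or42|apply: Or41|apply: Or44|apply: Or43]. Qed.

Lemma ADJ_irr n a : ~ ADJ n a a.
Proof.
have H1 : ~ S1 n a a by move=> [p [_ _ H _]]; lia.
have H2 : ~ S2 n a a by move=> [p [_ _ H _ [H' _]]]; lia.
by case.
Qed.

Lemma S1_shift n a b : a 0 = b 0 -> S1 n.+1 a b <-> S1 n (shift a) (shift b).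
Proof.
move=> H0; split.
  move=> [[|p] [H1 H2 H3 H4]]; first lia.
  exists p; split => //; move=> q Hq; apply: H2; by [].
move=> [p [H1 H2 H3 H4]]; exists p.+1; split => //.
by case=> [|q] //= Hq; apply: H2.
Qed.

Lemma S2_shift n a b : a 0 = b 0 -> S2 n.+1 a b <-> S2 n (shift a) (shift b).
Proof.
move=> H0; split.
  move=> [[|p] [H1 H2 H3 H4 [H5 H6]]]; first lia.
  exists p; split => //; move=> q Hq Hq'; apply: H2; by [].
move=> [p [H1 H2 H3 H4 [H5 H6]]]; exists p.+1; split => //.
by case=> [|q] //= Hq Hq'; apply: H2.
Qed.

Lemma ADJ_shift n a b : a 0 = b 0 -> ADJ n.+1 a b <-> ADJ n (shift a) (shift b).
Proof.
move=> H0; have H0' : b 0 = a 0 by [].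
split; case=> H.
- by apply: Or41; apply/S1_shift.
- by apply: Or42; apply/S1_shift.
- by apply: Or43; apply/S2_shift.
- by apply: Or44; apply/S2_shift.
- by apply: Or41; apply/S1_shift.
- by apply: Or42; apply/S1_shift.
- by apply: Or43; apply/S2_shift.
- by apply: Or44; apply/S2_shift.
Qed.

Definition hc1 (a b : nat -> nat) :=
  (forall q, 0 < q -> a q = b q) /\
  [/\ (a 0).+1 = b 0 \/ (b 0).+1 = a 0, a 0 <= k - 1 & b 0 <= k - 1].
Definition hc2 (a b : nat -> nat) :=
  (forall q, 1 < q -> a q = b q) /\
  ([/\ a 0 = k - 1, a 1 = k - 1, b 0 = k & b 1 = k] \/
   [/\ b 0 = k - 1, b 1 = k - 1, a 0 = k & a 1 = k]).

Lemma ADJ_hc n a b : ADJ n a b -> a 0 != b 0 -> hc1 a b \/ hc2 a b.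
Proof.
move=> H /eqP Hn; case: H => [] [[|p]].
- move=> [H1 H2 H3 H4]; left; split; first by move=> q Hq; apply: H2; lia.
  split; lia.
- by move=> [_ H2 _ _]; exfalso; apply: Hn; apply: H2.
- move=> [H1 H2 H3 H4]; left; split; first by move=> q Hq; apply/esym/H2; lia.
  split; lia.
- by move=> [_ H2 _ _]; exfalso; apply: Hn; apply/esym/H2.
- move=> [H1 H2 H3 H4 [H5 H6]]; right; split; first by move=> q Hq; apply: H2; lia.
  by left.
- by move=> [_ H2 _ _ _]; exfalso; apply: Hn; apply: H2.
- move=> [H1 H2 H3 H4 [H5 H6]]; right; split; first by move=> q Hq; apply/esym/H2; lia.
  by right.
- by move=> [_ H2 _ _ _]; exfalso; apply: Hn; apply/esym/H2.
Qed.

Lemma hc1_ADJ n a b : 0 < n -> (forall q, 0 < q -> a q = b q) -> (a 0).+1 = b 0 ->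
  b 0 <= k - 1 -> ADJ n a b.
Proof.
move=> Hn H1 H2 H3; apply: Or41; exists 0; split => // q Hq; apply: H1; lia.
Qed.

Lemma hc2_ADJ n a b : 1 < n -> (forall q, 1 < q -> a q = b q) ->
  a 0 = k - 1 -> a 1 = k - 1 -> b 0 = k -> b 1 = k -> ADJ n a b.
Proof.
move=> Hn H1 H2 H3 H4 H5; apply: Or43; exists 0; split => // q Hq Hq'; apply: H1; lia.
Qed.

Lemma ADJ_headA n a b : ADJ n a b -> a 0 != b 0 -> a 0 = (b 0).+1 \/ b 0 = (a 0).+1.
Proof.
move=> H Hn; case: (ADJ_hc H Hn) => [[_ [H1 H2 H3]]|[_ [[H1 H2 H3 H4]|[H1 H2 H3 H4]]]]; lia.
Qed.

Lemma ADJ_headB n a b c : ADJ n a b -> ADJ n c b -> a 0 = c 0 -> a 0 != b 0 ->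
  forall q, a q = c q.
Proof.
move=> Hab Hcb Hac Hn.
have Hn' : c 0 != b 0 by rewrite -Hac.
case=> [//|[|q]].
- case: (ADJ_hc Hab Hn) (ADJ_hc Hcb Hn') => [[Ha1 [Ha2 Ha3 Ha4]]|[Ha1 Ha2]]
    [[Hc1 [Hc2 Hc3 Hc4]]|[Hc1 Hc2]].
  + by rewrite Ha1 // Hc1.
  + case: Hc2 => -[]; lia.
  + case: Ha2 => -[]; lia.
  + case: Ha2 Hc2 => -[] ? ? ? ? [] [] ? ? ? ?; lia.
- case: (ADJ_hc Hab Hn) (ADJ_hc Hcb Hn') => [[Ha1 _]|[Ha1 _]] [[Hc1 _]|[Hc1 _]];
    by rewrite Ha1 // Hc1.
Qed.

End Fun.

Section Pell.
Variable k : nat.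
Hypothesis hk : 1 < k.

Local Notation V n := (pell_vertex n k).

Definition sq n (x : V n) : seq nat := map (@nat_of_ord _) (tval (sval x)).
Definition L n (x : V n) q := nth 0 (sq x) q.

Lemma size_sq n (x : V n) : size (sq x) = n.
Proof. by rewrite size_map size_tuple. Qed.

Lemma pell_sq n (x : V n) : pellb k (sq x).
Proof. exact: (proj2_sig x). Qed.

Lemma L_out n (x : V n) q : n <= q -> L x q = 0.
Proof. by move=> Hq; rewrite /L nth_default // size_sq. Qed.

Lemma L_le n (x : V n) q : L x q <= k.
Proof.
case: (ltnP q n) => Hq; last by rewrite L_out.
by rewrite /L (nth_map ord0) ?size_tuple // leq_ord.
Qed.

Lemma L_inj n (x y : V n) : (forall q, L x q = L y q) -> x = y.
Proof.
move=> H; have Hs : sq x = sq y.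
  apply: (@eq_from_nth _ 0); first by rewrite !size_sq.
  by move=> q _; exact: H.
apply: val_inj; apply: val_inj; exact: (inj_map val_inj Hs).
Qed.

Lemma letterE n (x : V n) i : letter (sval x) i = L x i.
Proof.
by rewrite /letter /L (tnth_nth ord0) (nth_map ord0) // size_tuple.
Qed.

Lemma step1E n (x y : V n) : step1 (sval x) (sval y) <-> S1 k n (L x) (L y).
Proof.
split.
  case/existsP => i /and3P [/forallP H1 /eqP H2 H3].
  move: H2 H3; rewrite !letterE => H2 H3.
  exists (val i); split; [exact: ltn_ord | | done | done].
  move=> q Hq; case: (ltnP q n) => Hqn; last by rewrite !L_out.
  move: (H1 (Ordinal Hqn)); rewrite !letterE /= => /implyP H; apply/eqP; apply: H.
  by apply: contra Hq => /eqP <-.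
move=> [p [Hp H1 H2 H3]]; apply/existsP; exists (Ordinal Hp).
apply/and3P; split; [ | by rewrite !letterE /= H2 | by rewrite letterE].
apply/forallP => j; apply/implyP => Hj.
rewrite !letterE H1 //; apply: contra Hj => /eqP Hj; apply/eqP; exact: val_inj.
Qed.

Lemma step2E n (x y : V n) : step2 (sval x) (sval y) <-> S2 k n (L x) (L y).
Proof.
split.
  case/existsP => i /existsP [i' /and4P [/eqP Hii H1 H2 /and3P [H3 H4 /forallP H5]]].
  move: H1 H2 H3 H4; rewrite !letterE Hii => /eqP H1 /eqP H2 /eqP H3 /eqP H4.
  exists (val i); split; [by rewrite -Hii ltn_ord| |done|done|done].
  move=> q Hq Hq'; case: (ltnP q n) => Hqn; last by rewrite !L_out.
  move: (H5 (Ordinal Hqn)); rewrite !letterE /= => /implyP H; apply/eqP; apply: H.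
  apply/andP; split; first by apply: contra Hq => /eqP <-.
  by apply: contra Hq' => /eqP E; rewrite -Hii -E.
move=> [p [Hp H1 H2 H3 [H4 H5]]].
have Hp' : p < n by apply: ltnW.
apply/existsP; exists (Ordinal Hp'); apply/existsP; exists (Ordinal Hp).
rewrite !letterE /= H2 H3 H4 H5 !eqxx /=; apply/forallP => j; apply/implyP => /andP [Hj Hj'].
rewrite !letterE; apply/eqP; apply: H1.
  by apply: contra Hj => /eqP E; apply/eqP; exact: val_inj.
by apply: contra Hj' => /eqP E; apply/eqP; exact: val_inj.
Qed.

Lemma adjE n (x y : V n) : pell_adj x y <-> ADJ k n (L x) (L y).
Proof.
rewrite /pell_adj; split.
  case/or4P => H.
  - by apply: Or41; apply/step1E.
  - by apply: Or42; apply/step1E.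
  - by apply: Or43; apply/step2E.
  - by apply: Or44; apply/step2E.
case=> H; apply/or4P.
- by apply: Or41; apply/step1E.
- by apply: Or42; apply/step1E.
- by apply: Or43; apply/step2E.
- by apply: Or44; apply/step2E.
Qed.

Lemma adj_sym n (x y : V n) : pell_adj x y = pell_adj y x.
Proof. rewrite /pell_adj /=; case: (step1 (sval x) (sval y)); case: (step1 (sval y) (sval x)); case: (step2 (sval x) (sval y)); by case: (step2 (sval y) (sval x)). Qed.

Lemma adj_irr n : irreflexive (@pell_adj n k).
Proof. move=> x; apply/negbTE/negP => H; move/adjE: H; exact: (ADJ_irr (ltnW hk)). Qed.

Lemma pell_nseq n : pellb k (map (@nat_of_ord _) (nseq_tuple n (ord0 : 'I_k.+1))).
Proof.
have -> : map (@nat_of_ord _) (nseq_tuple n (ord0 : 'I_k.+1)) = nseq n 0.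
  by rewrite /= map_nseq.
elim: n => //= n ->; case: eqP => //; lia.
Qed.

Definition v0 n : V n := exist _ (nseq_tuple n ord0) (pell_nseq n).

Definition emb n (j : 'I_k.+1) (x : V n) : V n.+1 :=
  insubd (v0 n.+1) (cons_tuple j (sval x)).
Definition embK n (x : V n) : V n.+2 :=
  insubd (v0 n.+2) (cons_tuple ord_max (cons_tuple ord_max (sval x))).
Definition untail n (x : V n.+1) : V n := insubd (v0 n) (behead_tuple (sval x)).
Definition untail2 n (x : V n.+2) : V n :=
  insubd (v0 n) (behead_tuple (behead_tuple (sval x))).

Lemma hk0 : 0 < k. Proof. lia. Qed.

Lemma sval_emb n (j : 'I_k.+1) (x : V n) : val j != k ->
  sval (emb j x) = cons_tuple j (sval x).
Proof.
move=> Hj; rewrite /emb val_insubd.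
have -> : pellb k (map (@nat_of_ord _) (cons_tuple j (sval x))) by rewrite /= (negbTE Hj) pell_sq.
done.
Qed.

Lemma L_emb n (j : 'I_k.+1) (x : V n) q : val j != k ->
  L (emb j x) q = if q is q'.+1 then L x q' else val j.
Proof. by move=> Hj; rewrite /L /sq sval_emb //; case: q. Qed.

Lemma sval_embK n (x : V n) :
  sval (embK x) = cons_tuple ord_max (cons_tuple ord_max (sval x)).
Proof.
rewrite /embK val_insubd.
have -> : pellb k (map (@nat_of_ord _) (cons_tuple (ord_max : 'I_k.+1) (cons_tuple ord_max (sval x)))).
  by rewrite /= eqxx pell_sq.
done.
Qed.

Lemma L_embK n (x : V n) q :
  L (embK x) q = match q with 0 => k | 1 => k | q'.+2 => L x q' end.
Proof. by rewrite /L /sq sval_embK; case: q => [|[|q]]. Qed.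

Lemma pell_behead (s : seq nat) : pellb k s -> nth 0 s 0 != k -> pellb k (behead s).
Proof. by case: s => //= a s; case: eqP. Qed.

Lemma pell_behead2 (s : seq nat) : pellb k s -> nth 0 s 0 = k ->
  pellb k (behead (behead s)) /\ nth 0 s 1 = k.
Proof.
case: s => [|a [|b s]] /= Hp Ha; first lia.
  by move: Hp; rewrite Ha eqxx.
by move: Hp; rewrite Ha eqxx => /andP [/eqP].
Qed.

Lemma L_untail n (x : V n.+1) q : L x 0 != k -> L (untail x) q = L x q.+1.
Proof.
move=> Hx; rewrite /L /sq /untail val_insubd.
have -> : pellb k (map (@nat_of_ord _) (behead_tuple (sval x))).
  by rewrite /= -behead_map; apply: pell_behead => //; exact: pell_sq.
by rewrite /= -behead_map nth_behead.
Qed.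

Lemma L_untail2 n (x : V n.+2) q : L x 0 = k -> L (untail2 x) q = L x q.+2.
Proof.
move=> Hx; rewrite /L /sq /untail2 val_insubd.
have -> : pellb k (map (@nat_of_ord _) (behead_tuple (behead_tuple (sval x)))).
  by rewrite /= -!behead_map; case: (pell_behead2 (pell_sq x) Hx).
by rewrite /= -!behead_map !nth_behead.
Qed.

Lemma L1_k n (x : V n.+1) : L x 0 = k -> L x 1 = k /\ 0 < n.
Proof.
move=> Hx; case: (pell_behead2 (pell_sq x) Hx) => _ H1; split => //.
case: n x Hx H1 => // x Hx H1; have : L x 1 = k := H1; rewrite L_out //; lia.
Qed.

Lemma L_V1 (x : V 1) : L x 0 < k.
Proof.
have := L_le x 0; rewrite leq_eqVlt => /orP [/eqP /L1_k [] //|//].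
Qed.

Definition jm : 'I_k.+1 := inord (k - 1).
Lemma val_jm : val jm = k - 1.
Proof. rewrite /jm /= inordK //; lia. Qed.
Lemma jm_neq : val jm != k.
Proof. rewrite val_jm; apply/eqP; lia. Qed.

Lemma emb_untail n (x : V n.+1) : L x 0 < k -> x = emb (inord (L x 0)) (untail x).
Proof.
move=> Hx; have Hv : val (inord (L x 0) : 'I_k.+1) = L x 0 by rewrite /= inordK //; lia.
apply: L_inj => q; rewrite L_emb Hv; last by apply/eqP; lia.
case: q => // q; rewrite L_untail //; apply/eqP; lia.
Qed.

Lemma embK_untail2 n (x : V n.+2) : L x 0 = k -> x = embK (untail2 x).
Proof.
move=> Hx; have [H1 _] := L1_k Hx.
apply: L_inj => q; rewrite L_embK; case: q => [|[|q]] //; by rewrite L_untail2.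
Qed.

Lemma emb_inj n (j : 'I_k.+1) : val j != k -> injective (@emb n j).
Proof.
move=> Hj x y H; apply: L_inj => q; have := congr1 (fun z => L z q.+1) H.
by rewrite /= !L_emb.
Qed.

Lemma embK_inj n : injective (@embK n).
Proof.
move=> x y H; apply: L_inj => q; have := congr1 (fun z => L z q.+2) H.
by rewrite /= !L_embK.
Qed.

Lemma adj_emb n (j : 'I_k.+1) (x y : V n) : val j != k ->
  pell_adj (emb j x) (emb j y) = pell_adj x y.
Proof.
move=> Hj.
have E0 : L (emb j x) 0 = L (emb j y) 0 by rewrite !L_emb.
have Ex : shift (L (emb j x)) =1 L x by move=> q; rewrite /shift L_emb.
have Ey : shift (L (emb j y)) =1 L y by move=> q; rewrite /shift L_emb.
apply/idP/idP => /adjE H; apply/adjE.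
  by move/(ADJ_shift hk0 _ E0): H; apply: ADJ_ext.
apply/(ADJ_shift hk0 _ E0); move: H; apply: ADJ_ext => q; by rewrite -?Ex -?Ey.
Qed.

Lemma adj_embK n (x y : V n) : pell_adj (embK x) (embK y) = pell_adj x y.
Proof.
have E0 : L (embK x) 0 = L (embK y) 0 by rewrite !L_embK.
have E1 : shift (L (embK x)) 0 = shift (L (embK y)) 0 by rewrite /shift !L_embK.
have Ex : shift (shift (L (embK x))) =1 L x by move=> q; rewrite /shift L_embK.
have Ey : shift (shift (L (embK y))) =1 L y by move=> q; rewrite /shift L_embK.
apply/idP/idP => /adjE H; apply/adjE.
  by move/(ADJ_shift hk0 _ E0)/(ADJ_shift hk0 _ E1): H; apply: ADJ_ext.
apply/(ADJ_shift hk0 _ E0)/(ADJ_shift hk0 _ E1); move: H; apply: ADJ_ext => q; by rewrite -?Ex -?Ey.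
Qed.

Lemma adj_emb_diff n (j j' : 'I_k.+1) (x y : V n) : val j < k -> val j' < k ->
  val j != val j' -> pell_adj (emb j x) (emb j' y) -> x = y.
Proof.
move=> Hj Hj' Hjj /adjE H.
have Hj0 : val j != k by apply/eqP; lia.
have Hj0' : val j' != k by apply/eqP; lia.
have Hn : L (emb j x) 0 != L (emb j' y) 0 by rewrite !L_emb.
case: (ADJ_hc hk0 H Hn) => [[H1 _]|[_ [[H1 H2 H3 H4]|[H1 H2 H3 H4]]]].
- apply: L_inj => q; have := H1 q.+1 isT; by rewrite !L_emb.
- move: H3; rewrite L_emb //; lia.
- move: H3; rewrite L_emb //; lia.
Qed.

Lemma adj_emb_succ n (j j' : 'I_k.+1) (x : V n) : (val j).+1 = val j' -> val j' < k ->
  pell_adj (emb j x) (emb j' x).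
Proof.
move=> Hjj Hj'; have Hj0 : val j != k by apply/eqP; lia.
have Hj0' : val j' != k by apply/eqP; lia.
apply/adjE; apply: (hc1_ADJ hk0) => //.
- by case=> // q _; rewrite !L_emb.
- by rewrite !L_emb.
- rewrite !L_emb //; lia.
Qed.

Lemma adj_emb_embK n (j : 'I_k.+1) (x : V n.+1) (y : V n) : val j < k ->
  pell_adj (emb j x) (embK y) -> emb j x = emb jm (emb jm y).
Proof.
move=> Hj /adjE H.
have Hj0 : val j != k by apply/eqP; lia.
have Hn : L (emb j x) 0 != L (embK y) 0 by rewrite L_emb // L_embK; apply/eqP; lia.
case: (ADJ_hc hk0 H Hn) => [[_ [_ _ H1]]|[H1 [[H2 H3 H4 H5]|[H2 H3 H4 H5]]]].
- move: H1; rewrite L_embK; lia.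
- apply: L_inj => -[|[|q]].
  + by rewrite H2 L_emb ?jm_neq // val_jm.
  + by rewrite H3 !L_emb ?jm_neq // val_jm.
  + by rewrite H1 // L_embK !L_emb ?jm_neq.
- move: H4; rewrite L_emb //; lia.
Qed.

Lemma adj_jm_embK n (y : V n) : pell_adj (emb jm (emb jm y)) (embK y).
Proof.
apply/adjE; apply: (hc2_ADJ hk0) => //.
- by case=> [|[|q]] // _; rewrite L_embK !L_emb ?jm_neq.
- by rewrite L_emb ?jm_neq // val_jm.
- by rewrite !L_emb ?jm_neq // val_jm.
- by rewrite L_embK.
- by rewrite L_embK.
Qed.

Lemma headA n (x y : V n) : pell_adj x y -> L x 0 != L y 0 ->
  L x 0 = (L y 0).+1 \/ L y 0 = (L x 0).+1.
Proof. by move/adjE; apply: (ADJ_headA hk0). Qed.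

Lemma headB n (a b c : V n) : pell_adj a b -> pell_adj c b -> L a 0 = L c 0 ->
  L a 0 != L b 0 -> a = c.
Proof.
move=> /adjE Hab /adjE Hcb Hac Hn; apply: L_inj; exact: (ADJ_headB hk0 Hab Hcb Hac Hn).
Qed.

End Pell.

Lemma sum_eq_idx N (p : nat) : \sum_(j < N) (((j : nat) == p) : nat) = (p < N).
Proof.
elim: N => [|N IH]; first by rewrite big_ord0.
rewrite big_ord_recr /= IH; case: (leqP N p) => H.
  by rewrite eqn_leq H /= ltnS.
by rewrite (gtn_eqF H) ltnS ltnW.
Qed.

Lemma sum_card (T : finType) (A : {set T}) (P : pred T) :
  \sum_(x in A) (P x : nat) = #|[set x in A | P x]|.
Proof.
rewrite -sum1_card.
have -> : \sum_(x in [set x in A | P x]) 1 = \sum_(x in A | P x) 1.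
  by apply: eq_bigl => x; rewrite !inE.
by rewrite big_mkcondr /=; apply: eq_bigr => x _; case: (P x).
Qed.

Lemma sum_last N (F : nat -> nat) : 0 < N -> \sum_(j < N) F j = \sum_(j < N.-1) F j + F N.-1.
Proof. by case: N => // N _; rewrite big_ord_recr. Qed.

Section Count.
Variable k : nat.
Hypothesis hk : 1 < k.
Local Notation V n := (pell_vertex n k).
Local Notation emb := (emb hk).
Local Notation embK := (embK hk).
Local Notation untail := (untail hk).
Local Notation untail2 := (untail2 hk).
Local Notation jm := (jm k).
Local Notation cube n i S := (induces_cube (@pell_adj n k) i S).
Local Notation c n i := (cube_count (@pell_adj n k) i).
Definition pc n i := if i is i'.+1 then c n i' else 0.

Definition single n (j : nat) (S : {set V n}) := [forall x in S, L x 0 == j].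
Definition pairp n (j : nat) (S : {set V n}) :=
  [&& [forall x in S, (L x 0 == j) || (L x 0 == j.+1)],
      [exists x in S, L x 0 == j] & [exists x in S, L x 0 == j.+1]].

Lemma structure n i (S : {set V n}) : cube n i S ->
  (exists p, forall x, x \in S -> L x 0 = p) \/
  (exists i', exists F0 F1 : Q i' -> V n, exists p0 p1,
     [/\ i = i'.+1, cubefun (@pell_adj n k) F0, cubefun (@pell_adj n k) F1,
         forall w, pell_adj (F0 w) (F1 w) &
       [/\ p0 != p1, forall w, L (F0 w) 0 = p0, forall w, L (F1 w) 0 = p1 &
           S = F0 @: setT :|: F1 @: setT]]).
Proof.
apply: (@cube_structure _ _ (fun x => L x 0)).
- move=> x y; exact: headA.
- move=> a b c; exact: headB.
Qed.

Lemma classify n i (S : {set V n}) : cube n i S ->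
  \sum_(j < k.+1) single j S + \sum_(j < k) pairp j S = 1.
Proof.
move=> HS; have [x0 Hx0] := cube_nonempty HS.
case: (structure HS) => [[p Hp]|[i' [F0 [F1 [p0 [p1 [Hi HF0 HF1 He [Hn H0 H1 HSe]]]]]]]].
- have Hpk : p <= k by rewrite -(Hp x0 Hx0) L_le.
  rewrite (eq_bigr (fun j : 'I_k.+1 => ((j : nat) == p) : nat)); last first.
    move=> j _; congr nat_of_bool; apply/idP/idP.
      by move/forall_inP/(_ x0 Hx0); rewrite Hp // eq_sym.
    by move/eqP => ->; apply/forall_inP => x Hx; rewrite Hp.
  rewrite sum_eq_idx ltnS Hpk big1 // => j _.
  apply/eqP; rewrite eqb0; apply/negP => /and3P [_ /exists_inP [x Hx Ex] /exists_inP [y Hy Ey]].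
  by move: Ex Ey; rewrite !Hp // => /eqP -> /eqP; lia.
- pose w0 : Q i' := [ffun => false].
  have hds x : x \in S -> L x 0 = p0 \/ L x 0 = p1.
    by rewrite HSe => /setUP [] /imsetP [w _ ->]; [left|right].
  have Hin0 : F0 w0 \in S by rewrite HSe; apply/setUP; left; apply: imset_f.
  have Hin1 : F1 w0 \in S by rewrite HSe; apply/setUP; right; apply: imset_f.
  have Hadj := headA hk (He w0); rewrite H0 H1 in Hadj; have {}Hadj := Hadj Hn.
  have Hpk : maxn p0 p1 <= k.
    by rewrite geq_max -(H0 w0) -(H1 w0) !L_le.
  rewrite big1 ?add0n; last first.
    move=> j _; apply/eqP; rewrite eqb0; apply/negP => /forall_inP H.
    have := H _ Hin0; have := H _ Hin1; rewrite H0 H1 => /eqP E1 /eqP E2.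
    by move: Hn; rewrite E1 E2 eqxx.
  rewrite (eq_bigr (fun j : 'I_k => ((j : nat) == minn p0 p1) : nat)); last first.
    move=> j _; congr nat_of_bool; apply/idP/idP.
      case/and3P => _ /exists_inP [x Hx /eqP Ex] /exists_inP [y Hy /eqP Ey].
      move: (hds x Hx) (hds y Hy) => Dx Dy; apply/eqP; lia.
    move/eqP => Ej; apply/and3P; split.
    + apply/forall_inP => x Hx; case: (hds x Hx) => ->; apply/orP; lia.
    + case: Hadj => E.
        by apply/exists_inP; exists (F1 w0) => //; rewrite H1 Ej; apply/eqP; lia.
      by apply/exists_inP; exists (F0 w0) => //; rewrite H0 Ej; apply/eqP; lia.
    + case: Hadj => E.
        by apply/exists_inP; exists (F0 w0) => //; rewrite H0 Ej; apply/eqP; lia.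
      by apply/exists_inP; exists (F1 w0) => //; rewrite H1 Ej; apply/eqP; lia.
  rewrite sum_eq_idx; apply/eqP; rewrite eqb1; lia.
Qed.

Lemma count_split n i : c n i =
  \sum_(j < k.+1) #|[set S | cube n i S & single j S]| +
  \sum_(j < k) #|[set S | cube n i S & pairp j S]|.
Proof.
rewrite /cube_count -sum1_card.
rewrite (eq_bigr (fun S => \sum_(j < k.+1) single j S + \sum_(j < k) pairp j S)); last first.
  by move=> S; rewrite inE => /classify ->.
rewrite big_split /= [X in X + _]exchange_big [X in _ + X]exchange_big /=.
congr (_ + _); apply: eq_bigr => j _; rewrite sum_card; apply: eq_card => S; by rewrite !inE.
Qed.

Lemma inord_val' (j : nat) : j <= k -> val (inord j : 'I_k.+1) = j.
Proof. by move=> Hj; rewrite /= inordK. Qed.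

Lemma count_single n i j : j < k ->
  #|[set S : {set V n.+1} | cube n.+1 i S & single j S]| = c n i.
Proof.
move=> Hj; pose J : 'I_k.+1 := inord j.
have HJ : val J = j by rewrite inord_val' //; lia.
have HJk : val J != k by rewrite HJ; apply/eqP; lia.
rewrite /cube_count -(card_imset _ (imset_inj (emb_inj HJk))).
apply: eq_card => S; rewrite inE; apply/andP/imsetP.
- case=> HS Hs.
  have Hr : {in S, forall y, emb J (untail y) = y}.
    move=> y Hy; move/forall_inP: Hs => /(_ y Hy) /eqP Ey.
    rewrite {2}(emb_untail hk (x := y)) ?Ey //.
  have [HT ->] := emb_cube_back (fun x y => adj_emb hk x y HJk) Hr HS.
  by exists [set untail x | x in S] => //; rewrite inE.
- case=> T; rewrite inE => HT ->; split.
    apply: emb_cube HT; [exact: emb_inj | move=> x y; exact: adj_emb].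
  by apply/forall_inP => x /imsetP [y _ ->]; rewrite L_emb // HJ.
Qed.

Lemma count_singleK n i :
  #|[set S : {set V n.+2} | cube n.+2 i S & single k S]| = c n i.
Proof.
rewrite /cube_count -(card_imset _ (imset_inj (@embK_inj k hk n))).
apply: eq_card => S; rewrite inE; apply/andP/imsetP.
- case=> HS Hs.
  have Hr : {in S, forall y, embK (untail2 y) = y}.
    move=> y Hy; move/forall_inP: Hs => /(_ y Hy) /eqP Ey.
    by rewrite -(embK_untail2 hk Ey).
  have [HT ->] := emb_cube_back (fun x y => adj_embK hk x y) Hr HS.
  by exists [set untail2 x | x in S] => //; rewrite inE.
- case=> T; rewrite inE => HT ->; split.
    apply: emb_cube HT; [exact: embK_inj | move=> x y; exact: adj_embK].
  by apply/forall_inP => x /imsetP [y _ ->]; rewrite L_embK.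
Qed.

Lemma count_single1 i : #|[set S : {set V 1} | cube 1 i S & single k S]| = 0.
Proof.
apply/eqP; rewrite cards_eq0; apply/eqP/setP => S; rewrite !inE.
apply/negbTE/negP => /andP [/cube_nonempty [x Hx] /forall_inP /(_ x Hx) /eqP Ex].
by have := L_V1 hk x; rewrite Ex ltnn.
Qed.

Lemma count_pair1 i : #|[set S : {set V 1} | cube 1 i S & pairp (k - 1) S]| = 0.
Proof.
apply/eqP; rewrite cards_eq0; apply/eqP/setP => S; rewrite !inE.
apply/negbTE/negP => /andP [_ /and3P [_ _ /exists_inP [x Hx /eqP Ex]]].
by have := L_V1 hk x; rewrite Ex; lia.
Qed.

Lemma pair_zero n (S : {set V n}) j : cube n 0 S -> pairp j S = false.
Proof.
move=> HS; apply/negbTE/negP => /and3P [_ /exists_inP [x Hx /eqP Ex] /exists_inP [y Hy /eqP Ey]].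
case: (structure HS) => [[p Hp]|[i' [F0 [F1 [p0 [p1 [Hi _]]]]]]] //.
by move: Ex Ey; rewrite !Hp //; lia.
Qed.

Lemma pair_heads n (S : {set V n}) j i' (F0 F1 : Q i' -> V n) p0 p1 :
  S = F0 @: setT :|: F1 @: setT -> (forall w, L (F0 w) 0 = p0) ->
  (forall w, L (F1 w) 0 = p1) -> pairp j S ->
  (p0 = j /\ p1 = j.+1) \/ (p0 = j.+1 /\ p1 = j).
Proof.
move=> HSe H0 H1 /and3P [_ /exists_inP [x Hx /eqP Ex] /exists_inP [y Hy /eqP Ey]].
have hds z : z \in S -> L z 0 = p0 \/ L z 0 = p1.
  by rewrite HSe => /setUP [] /imsetP [w _ ->]; [left|right].
move: (hds x Hx) (hds y Hy); lia.
Qed.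

Lemma count_pair n i j : j.+1 < k ->
  #|[set S : {set V n.+1} | cube n.+1 i S & pairp j S]| = pc n i.
Proof.
move=> Hj; pose J : 'I_k.+1 := inord j; pose J1 : 'I_k.+1 := inord j.+1.
have HJ : val J = j by rewrite inord_val' //; lia.
have HJ1 : val J1 = j.+1 by rewrite inord_val' //; lia.
have HJk : val J != k by rewrite HJ; apply/eqP; lia.
have HJ1k : val J1 != k by rewrite HJ1; apply/eqP; lia.
have Hdisj x y : emb J x != emb J1 y.
  by apply/eqP => E; have := congr1 (fun z => L z 0) E; rewrite /= !L_emb // HJ HJ1; lia.
case: i => [|i].
  apply/eqP; rewrite cards_eq0; apply/eqP/setP => S; rewrite !inE.
  by apply/negbTE/negP => /andP [HS]; rewrite pair_zero.
have e01 x y : pell_adj (emb J x) (emb J1 y) = (x == y).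
  apply/idP/eqP => [|->]; first by apply: adj_emb_diff; rewrite ?HJ ?HJ1 //; lia.
  by apply: adj_emb_succ; rewrite ?HJ ?HJ1 //.
have e10 x y : pell_adj (emb J1 x) (emb J y) = (x == y) by rewrite adj_sym e01 eq_sym.
have dec (Flo Fhi : Q i -> V n.+1) : cubefun (@pell_adj _ k) Flo ->
    (forall w, pell_adj (Flo w) (Fhi w)) ->
    (forall w, L (Flo w) 0 = j) -> (forall w, L (Fhi w) 0 = j.+1) ->
    exists2 T, cube n i T & Flo @: setT :|: Fhi @: setT = emb J @: T :|: emb J1 @: T.
  move=> HF He Hlo Hhi.
  have Elo w : emb J (untail (Flo w)) = Flo w.
    by rewrite {2}(emb_untail hk (x := Flo w)) ?Hlo //; lia.
  have Ehi' w : emb J1 (untail (Fhi w)) = Fhi w.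
    by rewrite {2}(emb_untail hk (x := Fhi w)) ?Hhi //; lia.
  have Ehi w : Fhi w = emb J1 (untail (Flo w)).
    rewrite -Ehi'; congr emb.
    apply: (@adj_emb_diff k hk n J1 J); rewrite ?HJ ?HJ1 //; try lia.
    by rewrite Elo Ehi' adj_sym He.
  have [HT HU] := pair_back HF Elo Ehi (fun x y => adj_emb hk x y HJk).
  by exists [set untail (Flo x) | x in setT] => //; rewrite setUC HU setUC.
rewrite /pc /cube_count -(card_imset _ (union_inj (emb_inj HJk) (Hdisj n))).
apply: eq_card => S; rewrite inE; apply/andP/imsetP.
- case=> HS Hp.
  case: (structure HS) => [[p Hp']|[i' [F0 [F1 [p0 [p1 [Hi HF0 HF1 He [Hn H0 H1 HSe]]]]]]]].
    move/and3P: Hp => [_ /exists_inP [x Hx /eqP Ex] /exists_inP [y Hy /eqP Ey]].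
    by move: Ex Ey; rewrite !Hp' //; lia.
  case: Hi => Hi; subst i'.
  case: (pair_heads HSe H0 H1 Hp) => [[E0 E1]|[E0 E1]].
    have [T HT HU] := dec F0 F1 HF0 He (fun w => etrans (H0 w) E0) (fun w => etrans (H1 w) E1).
    by exists T; rewrite ?inE // HSe HU.
  have [T HT HU] := dec F1 F0 HF1 (fun w => etrans (adj_sym _ _) (He w))
      (fun w => etrans (H1 w) E1) (fun w => etrans (H0 w) E0).
  by exists T; rewrite ?inE // HSe setUC HU.
- case=> T; rewrite inE => HT ->; split.
    exact: (prism_cube (emb_inj HJk) (emb_inj HJ1k) (fun x y => adj_emb hk x y HJk)
      (fun x y => adj_emb hk x y HJ1k) (e01 n) (e10 n) (Hdisj n) HT).
  have [t Ht] := cube_nonempty HT.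
  apply/and3P; split.
  + apply/forall_inP => x /setUP [] /imsetP [y _ ->]; rewrite L_emb // ?HJ ?HJ1 eqxx ?orbT //.
  + apply/exists_inP; exists (emb J t); first by apply/setUP; left; apply: imset_f.
    by rewrite L_emb // HJ.
  + apply/exists_inP; exists (emb J1 t); first by apply/setUP; right; apply: imset_f.
    by rewrite L_emb // HJ1.
Qed.

Lemma count_pairK n i :
  #|[set S : {set V n.+2} | cube n.+2 i S & pairp (k - 1) S]| = pc n i.
Proof.
pose g0 (y : V n) := emb jm (emb jm y).
have Hjm : val jm = k - 1 by rewrite val_jm.
have Hjmk : val jm != k by rewrite jm_neq.
have g0i : injective g0 by move=> x y /(emb_inj Hjmk) /(emb_inj Hjmk).
have Lg0 y : L (g0 y) 0 = k - 1 by rewrite /g0 L_emb // Hjm.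
have Hdisj x y : g0 x != embK y.
  by apply/eqP => E; have := congr1 (fun z => L z 0) E; rewrite /= Lg0 L_embK; lia.
case: i => [|i].
  apply/eqP; rewrite cards_eq0; apply/eqP/setP => S; rewrite !inE.
  by apply/negbTE/negP => /andP [HS]; rewrite pair_zero.
have a00 x y : pell_adj (g0 x) (g0 y) = pell_adj x y by rewrite /g0 !adj_emb.
have a01 x y : pell_adj (g0 x) (embK y) = (x == y).
  apply/idP/eqP => [|->]; last exact: adj_jm_embK.
  move/(adj_emb_embK (hk := hk)); rewrite Hjm => /(_ ltac:(lia)).
  by move/(emb_inj Hjmk)/(emb_inj Hjmk).
have a10 x y : pell_adj (embK x) (g0 y) = (x == y) by rewrite adj_sym a01 eq_sym.
have dec (Flo Fhi : Q i -> V n.+2) : cubefun (@pell_adj _ k) Fhi ->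
    (forall w, pell_adj (Flo w) (Fhi w)) ->
    (forall w, L (Flo w) 0 = k - 1) -> (forall w, L (Fhi w) 0 = k) ->
    exists2 T, cube n i T & Flo @: setT :|: Fhi @: setT = g0 @: T :|: [set embK x | x in T].
  move=> HF He Hlo Hhi.
  have Ehi w : embK (untail2 (Fhi w)) = Fhi w by rewrite -embK_untail2.
  have Elo w : Flo w = g0 (untail2 (Fhi w)).
    have E1 : Flo w = emb jm (untail (Flo w)).
      by rewrite {1}(emb_untail hk (x := Flo w)) Hlo //; lia.
    rewrite {1}E1; apply: (adj_emb_embK (hk := hk)); first by rewrite Hjm; lia.
    by rewrite -E1 Ehi.
  have [HT HU] := pair_back HF Ehi Elo (fun x y => adj_embK hk x y).
  by exists [set untail2 (Fhi x) | x in setT].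
rewrite /pc /cube_count -(card_imset _ (union_inj g0i Hdisj)).
apply: eq_card => S; rewrite inE; apply/andP/imsetP.
- case=> HS Hp.
  case: (structure HS) => [[p Hp']|[i' [F0 [F1 [p0 [p1 [Hi HF0 HF1 He [Hn H0 H1 HSe]]]]]]]].
    move/and3P: Hp => [_ /exists_inP [x Hx /eqP Ex] /exists_inP [y Hy /eqP Ey]].
    by move: Ex Ey; rewrite !Hp' //; lia.
  case: Hi => Hi; subst i'.
  have Hk1 : (k - 1).+1 = k by lia.
  case: (pair_heads HSe H0 H1 Hp) => [[E0 E1]|[E0 E1]]; rewrite Hk1 in E0 E1.
    have [T HT HU] := dec F0 F1 HF1 He (fun w => etrans (H0 w) E0) (fun w => etrans (H1 w) E1).
    by exists T; rewrite ?inE // HSe HU.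
  have [T HT HU] := dec F1 F0 HF0 (fun w => etrans (adj_sym _ _) (He w))
      (fun w => etrans (H1 w) E1) (fun w => etrans (H0 w) E0).
  by exists T; rewrite ?inE // HSe setUC HU.
- case=> T; rewrite inE => HT ->; split.
    exact: (prism_cube g0i (@embK_inj k hk n) a00 (fun x y => adj_embK hk x y) a01 a10 Hdisj HT).
  have [t Ht] := cube_nonempty HT.
  apply/and3P; split.
  + apply/forall_inP => x /setUP [] /imsetP [y _ ->]; rewrite ?Lg0 ?L_embK ?eqxx //.
    by apply/orP; right; apply/eqP; lia.
  + by apply/exists_inP; exists (g0 t); [apply/setUP; left; apply: imset_f | rewrite Lg0].
  + apply/exists_inP; exists (embK t); first by apply/setUP; right; apply: imset_f.
    by rewrite L_embK; apply/eqP; lia.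
Qed.

End Count.

Section Rec.
Variable k : nat.
Hypothesis hk : 1 < k.
Local Notation V n := (pell_vertex n k).
Local Notation cube n i S := (induces_cube (@pell_adj n k) i S).
Local Notation c n i := (cube_count (@pell_adj n k) i).

Lemma rec_gen n i : c n.+1 i = k * c n i + (k - 1) * pc k n i +
  #|[set S : {set V n.+1} | cube n.+1 i S & single k S]| +
  #|[set S : {set V n.+1} | cube n.+1 i S & pairp (k - 1) S]|.
Proof.
rewrite count_split // big_ord_recr /=.
rewrite (eq_bigr (fun _ => c n i)); last by move=> j _; rewrite count_single //; have := ltn_ord j; lia.
rewrite sum_nat_const card_ord.
rewrite (sum_last (fun j => #|[set S : {set V n.+1} | cube n.+1 i S & pairp j S]|)); last lia.
rewrite (eq_bigr (fun _ => pc k n i)); last by move=> j _; rewrite count_pair //; have := ltn_ord j; lia.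
rewrite big_const_ord iter_addn_0 -subn1 [pc _ _ _ * _]mulnC.
by rewrite -!addnA; congr (_ + _); rewrite addnCA.
Qed.

Lemma rec_main m i : c m.+2 i = k * c m.+1 i + (k - 1) * pc k m.+1 i + c m i + pc k m i.
Proof. by rewrite rec_gen // count_singleK // count_pairK. Qed.

Lemma rec_one i : c 1 i = k * c 0 i + (k - 1) * pc k 0 i.
Proof. by rewrite rec_gen // count_single1 // count_pair1 // !addn0. Qed.

Lemma card_V0 : #|{: V 0}| = 1.
Proof.
rewrite -cardsT; apply/eqP/cards1P; exists (v0 hk 0); apply/setP => y; rewrite !inE.
by apply/esym/eqP; apply: L_inj => q; rewrite !L_out.
Qed.

Lemma c0 i : c 0 i = (i == 0).
Proof.
case: i => [|i]; first by rewrite cube_count0 ?card_V0 //; exact: adj_irr.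
rewrite cube_count_big // card_V0; have := ltn_expl i.+1 (isT : 1 < 2); lia.
Qed.

End Rec.
Import Order.TTheory GRing.Theory Num.Theory.
Local Open Scope ring_scope.

Lemma alg (k a b c d : nat) : (1 <= k)%N ->
  (((k * a + (k - 1) * b + c + d)%N%:R : int) = a%:R *+ k + (k%:R - 1) * b%:R + (c%:R + d%:R)).
Proof.
move=> hk; rewrite !natrD !natrM natrB // -mulr_natr.
ring.
Qed.

Theorem proposition5p1 (k : nat) (hk : (2 <= k)%N) :
  [/\ pell_cube_poly 0 k = 1,
      pell_cube_poly 1 k = k%:R + (k%:R - 1) *: 'X &
      forall n : nat, (2 <= n)%N ->
        pell_cube_poly n k =
          (k%:R + (k%:R - 1) *: 'X) * pell_cube_poly n.-1 k
          + (1 + 'X) * pell_cube_poly n.-2 k].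
Proof.
have coefP n i : (pell_cube_poly n k)`_i = (cube_count (@pell_adj n k) i)%:R.
  exact: coef_cube_poly.
have Hk1 : ((k - 1)%N%:R = k%:R - 1 :> int) by rewrite natrB //; lia.
split.
- apply/polyP => i; by rewrite coefP coef1 c0.
- apply/polyP => i; rewrite coefP rec_one // !c0 // coefD coefZ coefX coefMn coef1.
  case: i => [|[|i]] /=.
  + by rewrite muln1 muln0 addn0 mulr0 addr0.
  + by rewrite c0 // muln0 add0n muln1 mul0rn add0r mulr1 Hk1.
  + by rewrite c0 // !muln0 mul0rn mulr0 addr0.
- case=> [|[|m]] // _ /=.
  apply/polyP => i; rewrite coefP rec_main //.
  rewrite mulrDl mulrDl mul1r -scalerAl mulr_natl !coefD coefMn coefZ !coefXM !coefP.
  by case: i => [|i] /=; apply: alg; lia.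
Qed.
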